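(* Let $m\in\mathbb{N}$ and let $d_1,\ldots,d_m$ and $l_1,\ldots,l_m$ be positive integers. For every partition of $\mathbb{N}$ into finitely many pairwise disjoint parts, there exist polynomials $P_1,\ldots,P_m$, with $P_i$ of degree exactly $d_i$ and with nonnegative integer coefficients, and one part $A$ of the partition such that $P_i(j)\in A$ for all $i=1,\ldots,m$ and $j=1,\ldots,l_i$. Moreover, the same conclusion holds with $A$ replaced by any given piecewise syndetic set $A\subseteq\mathbb{N}$.
   Context: $\mathbb{N}=\{1,2,3,\ldots\}$. A set $A\subseteq\mathbb{N}$ is piecewise syndetic if there is $b\in\mathbb{N}$ such that for every $n\in\mathbb{N}$ there is an interval $\{x,x+1,\ldots,x+n\}$ such that every $y$ in this interval satisfies $\{y,y+1,\ldots,y+b\}\cap A\neq\emptyset$; equivalently, $A$ belongs to some ultrafilter in the smallest ideal $K(\beta\mathbb{N})$ of $(\beta\mathbb{N},+)$. *)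

(* Defs.v *)
From HB Require Import structures.
From mathcomp Require Import all_boot all_order all_algebra.
Set Implicit Arguments. Unset Strict Implicit. Unset Printing Implicit Defensive.
Import GRing.Theory.

(* Subsets of N = {1,2,3,...} are represented as predicates on nat;
   membership of 0 is excluded explicitly where relevant. *)

Definition piecewise_syndetic (A : nat -> Prop) : Prop :=
  exists b : nat, forall n : nat, exists x : nat, 0 < x /\
    forall y : nat, x <= y <= x + n ->
      exists z : nat, y <= z <= y + b /\ A z.

Definition nat_poly_deg (P : {poly nat}) (d : nat) : Prop :=
  size P = d.+1.

(* Main.v *)
Require Import Defs.
From mathcomp Require Import all_boot all_order all_algebra.
From Stdlib Require Import IndefiniteDescription.
From mathcomp Require Import zify.
Set Implicit Arguments. Unset Strict Implicit.

Definition APc (T : eqType) (c : nat -> T) k a d :=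
  forall i, (i <= k)%N -> c (a + i * d) = c a.

Definition Sk k := forall T : finType, exists N, forall c : nat -> T,
  exists a d, 0 < d /\ a + k.+1 * d < N /\ APc c k a d.

Definition Ck k (T : finType) s := exists N, forall c : nat -> T,
  (exists a d, 0 < d /\ a + k.+2 * d < N /\ APc c k.+1 a d) \/
  (exists f (A D : 'I_s -> nat), f < N /\
     (forall j, 0 < D j /\ A j + k.+1 * D j = f /\ f + D j < N /\ APc c k (A j) (D j))
     /\ injective (fun j => c (A j))).

Lemma C0 k T : Ck k T 0.
Proof.
exists 1 => c; right; exists 0, (fun _ => 0), (fun _ => 0); split => //.
by split => [[]|[]].
Qed.

Lemma Cstep k (IH : Sk k) (T : finType) s : Ck k T s -> Ck k T s.+1.
Proof.
case=> n Hn.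
have [M HM] := IH {ffun 'I_n -> T}.
exists ((M.*2 + 2) * n) => c.
pose Bc b := [ffun t : 'I_n => c (b * n + t)].
have [b0 [D [D0 [bM ABc]]]] := HM Bc.
have blk : forall i t, i <= k -> t < n -> c ((b0 + i * D) * n + t) = c (b0 * n + t).
  move=> i t ik tn.
  have := congr1 (fun g : {ffun 'I_n -> T} => g (Ordinal tn)) (ABc i ik).
  by rewrite /Bc !ffunE.
have b0n : (b0 + 1) * n <= (M.*2 + 2) * n.
  apply: leq_mul => //; lia.
case: (Hn (fun x => c (b0 * n + x))) => [[a [d [d0 [ad AP]]]]|[f [A [Dj [fn [HA inj]]]]]].
  left; exists (b0 * n + a), d; split => //; split.
    apply: leq_trans b0n; lia.
  by move=> i ik; rewrite -addnA AP.
case: (boolP [exists j, c (b0 * n + A j) == c (b0 * n + f)]).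
  case/existsP=> j /eqP Ej; left; exists (b0 * n + A j), (Dj j).
  have [Dj0 [Af [fD APj]]] := HA j.
  split => //; split.
    apply: leq_trans b0n; lia.
  move=> i; rewrite leq_eqVlt => /orP[/eqP ->|ik].
    by rewrite -addnA Af Ej.
  by rewrite -addnA APj.
rewrite negb_exists => /forallP nE.
right.
pose A' (j : 'I_s.+1) := if unlift ord_max j is Some j' then b0 * n + A j' else b0 * n + f.
pose D' (j : 'I_s.+1) := if unlift ord_max j is Some j' then Dj j' + D * n else D * n.
have n0 : 0 < n by lia.
have Dn0 : 0 < D * n by rewrite muln_gt0 D0.
have bk2 : (b0 + k.+2 * D).+1 <= M.*2 + 1.
  have : D <= b0 + k.+1 * D by lia.
  lia.
exists ((b0 + k.+1 * D) * n + f), A', D'; split.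
  have : (b0 + k.+1 * D).+1 * n <= (M.*2 + 2) * n by apply: leq_mul => //; lia.
  rewrite mulSn; lia.
split.
  move=> j; rewrite /A' /D'; case: unliftP => [j' _|_].
    have [Dj0 [Af [fD APj]]] := HA j'.
    split; first by rewrite addn_gt0 Dn0 orbT.
    split; first by rewrite mulnDr mulnDl mulnA; lia.
    split.
      have : (b0 + k.+2 * D).+1 * n <= (M.*2 + 2) * n by apply: leq_mul => //; lia.
      nia.
    move=> i ik.
    have Ai : A j' + i * Dj j' < n.
      have : i * Dj j' <= k.+1 * Dj j' by apply: leq_mul => //; lia.
      lia.
    have -> : b0 * n + A j' + i * (Dj j' + D * n) = (b0 + i * D) * n + (A j' + i * Dj j').
      rewrite !mulnDl mulnDr -!mulnA; lia.
    rewrite blk // addnA.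
    have := APj i ik; rewrite -addnA => ->.
    by [].
  split => //; split; first by rewrite mulnA; lia.
  split.
    have : (b0 + k.+2 * D).+1 * n <= (M.*2 + 2) * n by apply: leq_mul => //; lia.
    rewrite mulSn !mulnDl -!mulnA; lia.
  move=> i ik.
  have -> : b0 * n + f + i * (D * n) = (b0 + i * D) * n + f by rewrite mulnDl -mulnA; lia.
  by rewrite blk.
move=> j1 j2; rewrite /A'.
case: unliftP => [j1' -> |->]; case: unliftP => [j2' -> |->] //.
- by move/inj ->.
- by move=> E; move: (nE j1'); rewrite E eqxx.
- by move=> E; move: (nE j2'); rewrite E eqxx.
Qed.

Lemma vdw k : Sk k.
Proof.
elim: k => [|k IH] T.
  exists 2 => c; exists 0, 1; split => //; split => //.
  by move=> i; rewrite leqn0 => /eqP ->.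
have [N HN] : Ck k T #|T|.
  elim: #|T| => [|s]; [exact: C0 | exact: Cstep].
exists N => c; case: (HN c) => [[a [d [d0 [ad AP]]]]|[f [A [D [fN [HA inj]]]]]].
  by exists a, d.
have [y _ Ey] : exists2 j, true & c (A j) = c f.
  have : c f \in codom (fun j => c (A j)).
    move: (inj_card_onto inj); rewrite card_ord => /(_ (leqnn _)).
    by move=> H; apply: H.
  by case/codomP => j ->; exists j.
have [D0 [Af [fD APj]]] := HA y.
exists (A y), (D y); split => //; split; first by rewrite mulSn; lia.
move=> i; rewrite leq_eqVlt => /orP[/eqP ->|ik]; first by rewrite Af Ey.
by apply: APj.
Qed.

Local Open Scope ring_scope.
Import GRing.Theory.
Lemma polyfact (c D d j : nat) : (0 < D)%N -> (0<d)%N ->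
  size (D%:P * 'X^d + c%:P : {poly nat}) = d.+1 /\
  (D%:P * 'X^d + c%:P : {poly nat}).[j] = (D * j ^ d + c)%N.
Proof.
move=> D0 d0; have DP : (D%:P : {poly nat}) != 0%R by rewrite polyC_eq0 -lt0n.
have sz : size (D%:P * 'X^d : {poly nat}) = d.+1.
  rewrite size_mulXn // size_polyC.
  have -> : (D != 0 :> nat) by rewrite -lt0n.
  by rewrite addn1.
split.
  rewrite size_polyDl sz // size_polyC. by case: (c != 0).
by rewrite hornerD hornerM hornerC hornerXn hornerC natrXE.
Qed.


Theorem mainTheorem5 (m : nat) (d l : 'I_m -> nat)
    (hd : forall i, (0 < d i)%N) (hl : forall i, (0 < l i)%N) :
  (forall (k : nat) (c : nat -> 'I_k),
     exists (P : 'I_m -> {poly nat}) (a : 'I_k),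
       (forall i, nat_poly_deg (P i) (d i)) /\
       (forall i (j : nat), (1 <= j <= l i)%N ->
          (0 < (P i).[j])%N /\ c (P i).[j] = a))
  /\
  (forall A : nat -> Prop,
     (forall n, A n -> (0 < n)%N) ->
     piecewise_syndetic A ->
     exists P : 'I_m -> {poly nat},
       (forall i, nat_poly_deg (P i) (d i)) /\
       (forall i (j : nat), (1 <= j <= l i)%N -> A (P i).[j])).
Proof.
pose K := (\sum_(i < m) l i ^ d i)%N.
have Kb : forall i j, (j <= l i)%N -> (j ^ d i <= K)%N.
  move=> i j jl; apply: (@leq_trans (l i ^ d i)).
    by rewrite leq_exp2r.
  by rewrite /K (bigD1 i) //= leq_addr.
split.
  move=> k c.
  have [N HN] := vdw K 'I_k.
  have [a [D [D0 [_ AP]]]] := HN (fun x => c x.+1).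
  exists (fun i => D%:P * 'X^(d i) + (a.+1)%:P), (c a.+1); split.
    by move=> i; rewrite /nat_poly_deg; case: (@polyfact a.+1 D (d i) 0%N D0 (hd i)).
  move=> i j /andP[j1 jl]; case: (@polyfact a.+1 D (d i) j D0 (hd i)) => _ ->.
  split; first lia.
  have := AP _ (Kb i j jl) => /= <-.
  by congr c; lia.
move=> A A0 [b Hb].
have [N HN] := vdw K 'I_b.+1.
have [x [x0 Hx]] := Hb N.
have H : forall t, exists e : 'I_b.+1, (t <= N)%N -> A (x + t + e)%N.
  move=> t; case: (leqP t N) => tN; last by exists ord0.
  have [z [/andP[z1 z2] Az]] := Hx (x + t)%N ltac:(lia).
  have zb : (z - (x + t) < b.+1)%N by lia.
  exists (inord (z - (x + t))) => _; rewrite inordK //.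
  by have -> : (x + t + (z - (x + t)) = z)%N by lia.
pose o t := proj1_sig (constructive_indefinite_description _ (H t)).
have oP : forall t, (t <= N)%N -> A (x + t + o t)%N.
  by move=> t; rewrite /o; case: constructive_indefinite_description.
have [a [D [D0 [aN AP]]]] := HN o.
exists (fun i => D%:P * 'X^(d i) + (x + a + o a)%:P); split.
  by move=> i; rewrite /nat_poly_deg; case: (@polyfact (x + a + o a)%N D (d i) 0%N D0 (hd i)).
move=> i j /andP[j1 jl]; case: (@polyfact (x + a + o a)%N D (d i) j D0 (hd i)) => _ ->.
have jK := Kb i j jl.
have tN : (a + j ^ d i * D <= N)%N.
  have : (j ^ d i * D <= K.+1 * D)%N by apply: leq_mul => //; lia.
  lia.
have := oP _ tN; rewrite (AP _ jK).
by have -> : (x + (a + j ^ d i * D) + o a = D * j ^ d i + (x + a + o a))%N by lia.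
Qed.
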